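(* Let $k\ge 2$ and $l=2^{k-1}$. Then: (a),(b) the sequence $(d_n(k))_{n\ge k+1}$ is periodic with least period exactly $l$, i.e. $d_{n+l}(k)=d_n(k)$ for all $n\ge k+1$ and no smaller positive integer has this property; (c) $d_{n+l/2}(k)-d_n(k)\in\{5,-5\}$ for all $n\ge k+1$; (d) for each digit $j\in\{0,\dots,9\}$, the number of indices $i\in\{k+1,k+2,\dots,k+l\}$ with $d_i(k)=j$ equals the $j$-th component of the vector $A^{k-1}u\in\mathbb{Z}^{10}$, where components are indexed $0,\dots,9$, $A$ is the $10\times10$ matrix with rows and columns indexed by $0,\dots,9$ given by $A_{ij}=1$ if $\lfloor j/2\rfloor\equiv i\pmod 5$ and $A_{ij}=0$ otherwise (so row $i$ has ones exactly in columns $2(i\bmod 5)$ and $2(i\bmod 5)+1$), and $u$ is the vector whose component $2$ equals $1$ and all other components equal $0$.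
   Context: For integers $n\ge0$ and $k\ge0$, $d_n(k)\in\{0,\dots,9\}$ denotes the $k$-th decimal digit of $5^n$ counted from the right starting at $k=0$, i.e. $5^n=\sum_{k\ge0} d_n(k)10^k$ (with $d_n(k)=0$ for $k$ beyond the length of $5^n$). *)

(* Defs.v *)
From mathcomp Require Import all_boot all_order all_algebra.
Set Implicit Arguments. Unset Strict Implicit. Unset Printing Implicit Defensive.
Import GRing.Theory Num.Theory.

Definition digit5 (n k : nat) : nat := (5 ^ n %/ 10 ^ k) %% 10.

Definition Amat : 'M[int]_10 :=
  \matrix_(i < 10, j < 10) (if ((j %/ 2) == (i %% 5))%N then 1%R else 0%R).

Definition uvec : 'cV[int]_10 :=
  \col_(i < 10) (if ((i : nat) == 2)%N then 1%R else 0%R).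

(* Main.v *)
Set Warnings "-all".
Require Import Defs.
From mathcomp Require Import all_boot all_order all_algebra zify.
Set Warnings "-all".
Import GRing.Theory Num.Theory.

Lemma pow5 K : exists t, odd t /\ 5 ^ (2 ^ K) = 1 + 2 ^ K.+2 * t.
Proof.
elim: K => [|K [t [ot e]]]; first by exists 1.
exists (t + 2 ^ K.+1 * t * t); split.
  by rewrite oddD ot expnS !oddM /=.
rewrite (expnS 2 K) mulnC expnM e (expnS 2 K.+2) (expnS 2 K.+1) (expnS 2 K) -mulnn. move: (2 ^ K) => x. nia.
Qed.

Lemma half K n : K.+3 <= n ->
  digit5 (n + 2 ^ K) K.+2 = (digit5 n K.+2 + 5) %% 10.
Proof.
move=> hn; have [t [ot e]] := pow5 K.
rewrite /digit5 expnD e.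
have h5 : 5 ^ n = 5 ^ K.+2 * 5 * 5 ^ (n - K.+3).
  by rewrite -expnSr -expnD subnKC.
have h10 : 10 ^ K.+2 = 2 ^ K.+2 * 5 ^ K.+2 by rewrite -expnMn.
have -> : 5 ^ n * (1 + 2 ^ K.+2 * t) = 5 ^ n + (5 * (5 ^ (n - K.+3) * t)) * 10 ^ K.+2.
  rewrite h10 h5; nia.
rewrite divnDMl ?expn_gt0 // -modnDmr.
have -> : (5 * (5 ^ (n - K.+3) * t)) %% 10 = 5.
  by rewrite -[10]/(5 * 2) -muln_modr modn2 oddM oddX ot orbT.
by rewrite modnDml.
Qed.

Lemma per_mul (f : nat -> nat) N p :
  (forall n, N <= n -> f (n + p) = f n) -> forall q n, N <= n -> f (n + q * p) = f n.
Proof.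
move=> h q; elim: q => [|q IH] n hn; first by rewrite addn0.
by rewrite mulSnr addnA h ?IH // (leq_trans hn) ?leq_addr.
Qed.
Arguments per_mul {f N p} _ q n _.

Lemma partc K n : K.+3 <= n ->
  (Posz (digit5 (n + 2 ^ K) K.+2) - Posz (digit5 n K.+2) = 5 \/
   Posz (digit5 (n + 2 ^ K) K.+2) - Posz (digit5 n K.+2) = -5)%R.
Proof.
move=> hn; rewrite half //; have : digit5 n K.+2 < 10 by rewrite ltn_pmod.
move: (digit5 n K.+2) => d hd. lia.
Qed.

Lemma parta K n : K.+3 <= n -> digit5 (n + 2 ^ K.+1) K.+2 = digit5 n K.+2.
Proof.
move=> hn; rewrite expnS mul2n -addnn addnA half ?half //; last first.
  by rewrite (leq_trans hn) ?leq_addr.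
have : digit5 n K.+2 < 10 by rewrite ltn_pmod.
move: (digit5 n K.+2) => d hd. lia.
Qed.

Lemma partb K p : 0 < p ->
  (forall n, K.+3 <= n -> digit5 (n + p) K.+2 = digit5 n K.+2) -> 2 ^ K.+1 <= p.
Proof.
move=> hp hper; rewrite leqNgt; apply/negP => hlt.
have [a _ hdiv] := Bezoutl p (expn_gt0 2 K.+1).
set g := gcdn (2 ^ K.+1) p in hdiv.
have [c hc] : exists c, g + a * p = c * 2 ^ K.+1.
  by exists ((g + a * p) %/ 2 ^ K.+1); rewrite divnK.
have hg : forall n, K.+3 <= n -> digit5 (n + g) K.+2 = digit5 n K.+2.
  move=> n hn.
  rewrite -(per_mul hper a) ?(leq_trans hn) ?leq_addr // -addnA hc.
  exact: (per_mul (parta K) c).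
have : g %| 2 ^ K.+1 by exact: dvdn_gcdl.
case/(dvdn_pfactor _ _ (isT : prime 2)) => m hm hgm.
have hgp : g <= p by rewrite /g dvdn_leq // dvdn_gcdr.
have hmK : m <= K.
  rewrite leqNgt; apply/negP => hmK.
  have hmeq : m = K.+1 by apply/eqP; rewrite eqn_leq hm hmK.
  by move: (leq_ltn_trans hgp hlt); rewrite hgm hmeq ltnn.
have h2K : 2 ^ K = (2 ^ (K - m)) * g by rewrite hgm -expnD subnK.
have := per_mul hg (2 ^ (K - m)) K.+3 (leqnn _); rewrite -h2K half //.
have : digit5 K.+3 K.+2 < 10 by rewrite ltn_pmod.
move: (digit5 K.+3 K.+2) => d hd. lia.
Qed.

Lemma digit_succ n k : digit5 n.+1 k.+1 %% 5 = digit5 n k %/ 2.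
Proof.
rewrite /digit5 !expnS -[10 * 10 ^ k]/(5 * 2 * 10 ^ k) -mulnA divnMl // mulnC divnMA.
move: (5 ^ n %/ 10 ^ k) => q; rewrite modn_dvdm //; lia.
Qed.

Lemma count_add (a b c : pred nat) s :
  (forall n, n \in s -> a n + b n = c n) -> count a s + count b s = count c s.
Proof.
elim: s => [|x s IH] //= h.
rewrite -(h x) ?mem_head // -IH; first lia.
by move=> n hn; apply: h; rewrite inE hn orbT.
Qed.

Lemma count_pair (a c : pred nat) h m L :
  (forall n, m <= n -> a n.+1 + a (n.+1 + h) = c n) ->
  count a (iota m.+1 L) + count a (iota (m.+1 + h) L) = count c (iota m L).
Proof.
elim: L m => [|L IH] m hm //=.
rewrite -(hm m) // -IH; first (rewrite ?addSn; lia).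
by move=> n hn; apply: hm; rewrite ltnW.
Qed.

Lemma bool_fact (x j : nat) : x < 10 -> j < 10 ->
  (x == j) + ((x + 5) %% 10 == j) = (x %% 5 == j %% 5).
Proof. by move=> hx hj; case: eqP; case: eqP; case: eqP => /=; lia. Qed.

Lemma cnt_step K (j : nat) : j < 10 ->
  count (fun i => digit5 i K.+3 == j) (iota K.+4 (2 ^ K.+2)) =
  count (fun i => digit5 i K.+2 == 2 * (j %% 5)) (iota K.+3 (2 ^ K.+1)) +
  count (fun i => digit5 i K.+2 == (2 * (j %% 5)).+1) (iota K.+3 (2 ^ K.+1)).
Proof.
move=> hj.
rewrite (count_add _ _ (fun n => digit5 n K.+2 %/ 2 == j %% 5)); last first.
  move=> n _ /=.
  by case: eqP; case: eqP; case: eqP => /=; lia.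
rewrite -(count_pair (fun i => digit5 i K.+3 == j) (fun n => digit5 n K.+2 %/ 2 == j %% 5) (2 ^ K.+1) K.+3 (2 ^ K.+1)) ; last first.
  move=> n hn /=.
  rewrite half //.
  rewrite -digit_succ bool_fact // ltn_pmod //.
by rewrite expnS mul2n -addnn iotaD count_cat.
Qed.

Lemma Amul (v : 'cV[int]_10) (j : 'I_10) :
  ((Amat *m v) j ord0 = v (inord (2 * (j %% 5))%N) ord0 + v (inord (2 * (j %% 5)).+1) ord0)%R.
Proof.
rewrite !mxE.
rewrite (eq_bigr (fun i : 'I_10 => (if (i %/ 2 == j %% 5)%N then v (inord i) ord0 else 0)%R)); last first.
  by move=> i _; rewrite mxE inord_val; case: ifP => _; rewrite ?mul1r ?mul0r.
rewrite -(big_mkord xpredT (fun i => (if (i %/ 2 == j %% 5)%N then v (inord i) ord0 else 0)%R)).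
case: j => [[|[|[|[|[|[|[|[|[|[|j]]]]]]]]]] hj] //;
  rewrite !big_nat_recl // big_geq //= ?add0r ?addr0.
all: by [].
Qed.

Lemma partd K (j : 'I_10) :
  Posz (count (fun i => digit5 i K.+2 == j) (iota K.+3 (2 ^ K.+1))) =
  ((Amat ^+ K.+1 *m uvec) j ord0)%R.
Proof.
elim: K j => [|K IH] j.
  rewrite GRing.expr1 Amul !mxE !inordK; last 2 first.
    by rewrite ltnS; case: j => [[|[|[|[|[|[|[|[|[|[|j]]]]]]]]]] hj].
    by case: j => [[|[|[|[|[|[|[|[|[|[|j]]]]]]]]]] hj].
  by case: j => [[|[|[|[|[|[|[|[|[|[|j]]]]]]]]]] hj] //.
rewrite cnt_step // GRing.exprS -mulmxE -mulmxA Amul -!IH !inordK //.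
  by rewrite ltnS; case: j => [[|[|[|[|[|[|[|[|[|[|j]]]]]]]]]] hj].
by case: j => [[|[|[|[|[|[|[|[|[|[|j]]]]]]]]]] hj].
Qed.

Theorem theorem10p2 (k : nat) (hk : 2 <= k) :
  let l := 2 ^ k.-1 in
  (* (a) period l *)
  (forall n, k.+1 <= n -> digit5 (n + l) k = digit5 n k) /\
  (* (b) no smaller positive period *)
  (forall p, 0 < p -> (forall n, k.+1 <= n -> digit5 (n + p) k = digit5 n k) -> l <= p) /\
  (* (c) *)
  (forall n, k.+1 <= n ->
     (Posz (digit5 (n + l %/ 2) k) - Posz (digit5 n k) = 5 \/
      Posz (digit5 (n + l %/ 2) k) - Posz (digit5 n k) = -5)%R) /\
  (* (d) digit distribution over i in {k+1, ..., k+l} *)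
  (forall j : 'I_10,
     Posz (count (fun i => digit5 i k == j) (iota k.+1 l)) =
     ((Amat ^+ k.-1 *m uvec) j ord0)%R).
Proof.
case: k hk => [|[|K]] // _ l.
have hl : l %/ 2 = 2 ^ K by rewrite /l /= expnS mulKn.
split; first exact: parta.
split; first exact: partb.
split; first by move=> n hn; rewrite hl; exact: partc.
exact: partd.
Qed.
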